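(* In the public project problem with equal participation costs, there is no feasible Groves mechanism that welfare dominates the VCG mechanism.
   Context: Public project problem (equal participation costs): $n\ge2$ players, decisions $D=\{0,1\}$, $\Theta_i=[0,c]$ with $c>0$, $v_i(d,\theta_i)=d(\theta_i-c/n)$; efficient decision $f(\theta)=1$ iff $\sum_i\theta_i\ge c$. A Groves mechanism has taxes $t_i(\theta)=\sum_{j\ne i}v_j(f(\theta),\theta_j)+h_i(\theta_{-i})$ for arbitrary $h_i$; player $i$'s utility is $v_i(f(\theta),\theta_i)+t_i(\theta)$. The VCG (Clarke) mechanism uses $h_i(\theta_{-i})=-\max_{d\in D}\sum_{j\ne i}v_j(d,\theta_j)$. Feasible: $\sum_it_i(\theta)\le0$ for all $\theta$. $t'$ welfare dominates $t$ if $\sum_i t_i(\theta)\le\sum_i t'_i(\theta)$ for all $\theta$, strictly for some $\theta$. *)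

(* Defs.v *)
From HB Require Import structures.
From mathcomp Require Import all_boot all_order all_algebra.
Set Implicit Arguments. Unset Strict Implicit. Unset Printing Implicit Defensive.
Import Order.TTheory GRing.Theory Num.Theory.
Local Open Scope ring_scope.

Section PP.
Variables (R : realFieldType) (n : nat) (c : R).

Definition in_Theta (th : 'I_n -> R) : Prop := forall i, 0 <= th i <= c.

Definition val (d : bool) (thi : R) : R := (d%:R) * (thi - c / n%:R).

Definition eff (th : 'I_n -> R) : bool := c <= \sum_(i < n) th i.

Definition depends_only_on_others (h : 'I_n -> ('I_n -> R) -> R) : Prop :=
  forall i th th', in_Theta th -> in_Theta th' ->
    (forall j, j != i -> th j = th' j) -> h i th = h i th'.

Definition groves (h : 'I_n -> ('I_n -> R) -> R) (th : 'I_n -> R) (i : 'I_n) : R :=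
  \sum_(j < n | j != i) val (eff th) (th j) + h i th.

Definition h_vcg (i : 'I_n) (th : 'I_n -> R) : R :=
  - Num.max (\sum_(j < n | j != i) val false (th j))
            (\sum_(j < n | j != i) val true (th j)).

Definition vcg := groves h_vcg.

Definition feasible (t : ('I_n -> R) -> 'I_n -> R) : Prop :=
  forall th, in_Theta th -> \sum_(i < n) t th i <= 0.

Definition welfare_dominates (t' t : ('I_n -> R) -> 'I_n -> R) : Prop :=
  (forall th, in_Theta th -> \sum_(i < n) t th i <= \sum_(i < n) t' th i) /\
  (exists th, in_Theta th /\ \sum_(i < n) t th i < \sum_(i < n) t' th i).

End PP.

(* Main.v *)
Require Import Defs.
From Stdlib Require Import FunctionalExtensionality.
From HB Require Import structures.
From mathcomp Require Import all_boot all_order all_algebra.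
Import Order.TTheory GRing.Theory Num.Theory.
Set Implicit Arguments. Unset Strict Implicit.
Local Open Scope ring_scope.

Definition mix (R : Type) (n : nat) (S : {set 'I_n}) (th ps : 'I_n -> R) : 'I_n -> R :=
  fun j => if j \in S then ps j else th j.

Lemma box (R : realFieldType) (n : nat) (P : ('I_n -> R) -> Prop)
  (g : 'I_n -> ('I_n -> R) -> R) (th ps : 'I_n -> R) :
  (forall S : {set 'I_n}, P (mix S th ps)) ->
  (forall i (f f' : 'I_n -> R), P f -> P f' -> (forall j, j != i -> f j = f' j) -> g i f = g i f') ->
  \sum_(S : {set 'I_n}) (-1) ^+ #|S| * \sum_(i < n) g i (mix S th ps) = 0.
Proof.
move=> HP Hg.
under eq_bigr do rewrite mulr_sumr.
rewrite exchange_big /=; apply: big1 => i _.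
set F := fun S : {set 'I_n} => (-1) ^+ #|S| * g i (mix S th ps).
pose tog (S : {set 'I_n}) := if i \in S then S :\ i else i |: S.
have togK : involutive tog.
  move=> S; rewrite /tog; have [iS|iS] := boolP (i \in S).
    by rewrite setD11 setD1K.
  by rewrite setU11 setU1K.
have Ftog : forall S, F (tog S) = - F S.
  move=> S; rewrite /F /tog.
  have -> : g i (mix (if i \in S then S :\ i else i |: S) th ps) = g i (mix S th ps).
    apply: Hg; [exact: HP | exact: HP | ].
    move=> j ji; rewrite /mix; have [iS|iS] := boolP (i \in S).
      by rewrite in_setD1 ji.
    by rewrite in_setU1 (negbTE ji).
  case: ifP => iS.
    by rewrite [in RHS](cardsD1 i S) iS exprS mulN1r mulNr opprK.
  by rewrite cardsU1 iS exprS mulN1r mulNr.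
have E : \sum_(S : {set 'I_n}) F S = - \sum_(S : {set 'I_n}) F S.
  rewrite {1}(reindex_inj (inv_inj togK)) /= -sumrN.
  by apply: eq_bigr => S _; rewrite Ftog.
have : (\sum_(S : {set 'I_n}) F S) *+ 2 = 0 by rewrite mulr2n {1}E addNr.
by move/eqP; rewrite mulrn_eq0 /= => /eqP.
Qed.

Theorem theorem3 (R : realFieldType) (n : nat) (c : R)
  (hn : (2 <= n)%N) (hc : 0 < c) (h : 'I_n -> ('I_n -> R) -> R) :
  depends_only_on_others c h ->
  feasible c (groves c h) ->
  ~ welfare_dominates c (groves c h) (vcg c).
Proof.
move=> hdep hfeas [hdom [th0 [th0T th0lt]]].
set m := c / n%:R.
have n0 : (0 < n%:R :> R) by rewrite ltr0n; apply: leq_trans hn.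
have nm : n%:R * m = c by rewrite /m mulrC divfK // gt_eqF.
have m0 : 0 < m by rewrite /m divr_gt0.
have mc : m < c.
  rewrite -nm -{1}(mul1r m) ltr_pM2r // ltr1n; exact: hn.
pose g i th := h i th - h_vcg c i th.
pose G th := \sum_(i < n) g i th.
have Gsplit : forall th, \sum_(i < n) groves c h th i = \sum_(i < n) vcg c th i + G th.
  move=> th; rewrite /G -big_split /=; apply: eq_bigr => i _.
  by rewrite /vcg /groves /g -addrA [h_vcg _ _ _ + _]addrC subrK.
have Gge0 : forall th, in_Theta c th -> 0 <= G th.
  move=> th /hdom; rewrite Gsplit -subr_ge0 addrAC subrr add0r //.
have gdep : forall i (f f' : 'I_n -> R), in_Theta c f -> in_Theta c f' ->
    (forall j, j != i -> f j = f' j) -> g i f = g i f'.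
  move=> i f f' Hf Hf' E; rewrite /g (hdep i f f' Hf Hf' E) /h_vcg.
  by congr (_ - - Num.max _ _); apply: eq_bigr => j /E ->.
have valT : forall (x : R), Defs.val n c true x = x - m by move=> x; rewrite /Defs.val mul1r.
have valF : forall (x : R), Defs.val n c false x = 0 by move=> x; rewrite /Defs.val mul0r.
have Bid : forall (f : 'I_n -> R) i, \sum_(j < n | j != i) Defs.val n c true (f j)
     = \sum_(j < n) f j - f i - (c - m).
  move=> f i.
  have E1 : \sum_(j < n) (f j - m) = \sum_(j < n) f j - c.
    by rewrite sumrB sumr_const card_ord -mulr_natl nm.
  rewrite (bigD1 i) //= in E1.
  under eq_bigr do rewrite valT.
  apply: (addrI (f i - m)); rewrite E1.
  rewrite opprB addrACA [f i + (_ - f i)]addrC subrK; congr (_ + _); by rewrite addrA addNr add0r.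
have zeroTax : forall f, in_Theta c f ->
   ((c <= \sum_(j < n) f j) /\ (forall i, c - m <= \sum_(j < n) f j - f i)) \/
   ((\sum_(j < n) f j < c) /\ (forall i, \sum_(j < n) f j - f i <= c - m)) ->
   G f <= 0.
  move=> f fT Hc.
  have : \sum_(i < n) vcg c f i = 0.
    apply: big1 => i _; rewrite /vcg /groves /h_vcg.
    under [X in Num.max X _]eq_bigr do rewrite valF.
    rewrite big1_eq Bid.
    case: Hc => [[e1 e2]|[e1 e2]].
      rewrite /eff e1 Bid max_r ?subrr // subr_ge0; exact: e2.
    rewrite /eff leNgt e1 /=.
    under eq_bigr do rewrite valF.
    by rewrite big1_eq max_l ?oppr0 ?addr0 // subr_le0.
  by move=> E; have := hfeas f fT; rewrite Gsplit E add0r.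
have step : forall f, in_Theta c f ->
    (forall f', in_Theta c f' ->
       (#|[set j | f' j != m]| < #|[set j | f j != m]|)%N -> G f' <= 0) ->
    G f <= 0.
  move=> f fT IH.
  pose v := if eff c f then c else 0.
  pose ps j := if f j == m then v else m.
  have vT : 0 <= v <= c by rewrite /v; case: ifP => _; rewrite ?lexx ?(ltW hc).
  have mT : 0 <= m <= c by rewrite (ltW m0) (ltW mc).
  have psT : in_Theta c ps by move=> j; rewrite /ps; case: ifP.
  have mixT : forall S : {set 'I_n}, in_Theta c (mix S f ps).
    by move=> S j; rewrite /mix; case: ifP => _; [exact: psT | exact: fT].
  have Hbox := box mixT gdep.
  rewrite (bigD1 set0) //= in Hbox.
  have mix0 : mix set0 f ps = f.
    by apply: functional_extensionality => j; rewrite /mix in_set0.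
  rewrite mix0 cards0 expr0 mul1r in Hbox.
  suff : 0 <= \sum_(S | S != set0) (-1) ^+ #|S| * G (mix S f ps).
    by move/eqP: Hbox; rewrite addr_eq0 => /eqP E; rewrite /G E oppr_le0.
  apply: sumr_ge0 => S S0.
  rewrite -signr_odd; case: (boolP (odd #|S|)) => oS /=; last first.
    by rewrite expr0 mul1r; apply: Gge0.
  rewrite expr1 mulN1r oppr_ge0.
  have vm : v != m.
    rewrite /v; case: ifP => _; first by rewrite gt_eqF.
    by rewrite lt_eqF.
  set NZ := [set j | f j != m].
  have cardS : (#|S :&: NZ| + #|S :\: NZ| = #|S|)%N := cardsID NZ S.
  case: (ltngtP #|S :\: NZ| #|S :&: NZ|) => hab; last first.
  - by move: oS; rewrite -cardS hab addnn odd_double.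
  - (* a < b : zero taxes *)
    apply: zeroTax; first exact: mixT.
    have phT := mixT S.
    set phi := mix S f ps in phT *.
    have D1 : \sum_(j < n) phi j - \sum_(j < n) f j =
       \sum_(j in S :&: NZ) (m - f j) + \sum_(j in S :\: NZ) (v - m).
      rewrite -sumrB (bigID (mem S)) /=.
      rewrite [X in _ + X]big1 ?addr0; last first.
        by move=> j /negbTE jS; rewrite /phi /mix jS subrr.
      rewrite (big_setID NZ) /=.
      congr (_ + _); apply: eq_bigr => j; rewrite !inE.
        by move=> /andP [jS jNZ]; rewrite /phi /mix jS /ps (negbTE jNZ).
      move=> /andP [jNZ jS]; rewrite negbK in jNZ.
      by rewrite /phi /mix jS /ps jNZ (eqP jNZ).
    have [d hd] : exists d, #|S :\: NZ| = (#|S :&: NZ| + d.+1)%N.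
      by exists (#|S :\: NZ| - #|S :&: NZ|.+1)%N; rewrite addnS -addSn subnKC.
    have cm0 : 0 <= c - m by rewrite subr_ge0 ltW.
    case ef: (eff c f).
    + have hv : v = c by rewrite /v ef.
      have lb : c - m <= \sum_(j < n) phi j - \sum_(j < n) f j.
        rewrite D1 hv.
        have L1 : (m - c) *+ #|S :&: NZ| <= \sum_(j in S :&: NZ) (m - f j).
          rewrite -sumr_const; apply: ler_sum => j _.
          by rewrite lerD2l lerN2; case/andP: (fT j).
        rewrite sumr_const.
        apply: le_trans (lerD L1 (lexx _)).
        rewrite hd mulrnDr addrA -[m - c]opprB mulNrn addNr add0r.
        by rewrite mulrS lerDl mulrn_wge0.
      have ef' : c <= \sum_(j < n) f j by exact: ef.
      rewrite lerBrDl in lb.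
      have Tb : c + (c - m) <= \sum_(j < n) phi j.
        by apply: le_trans lb; rewrite lerD2r.
      left; split.
        by apply: le_trans Tb; rewrite lerDl.
      move=> i; rewrite lerBrDr; apply: le_trans Tb.
      by rewrite [c - m + _]addrC lerD2r; case/andP: (phT i).
    + have hv : v = 0 by rewrite /v ef.
      have ef' : \sum_(j < n) f j < c by rewrite ltNge; move: ef; rewrite /eff => ->.
      have ub : \sum_(j < n) phi j - \sum_(j < n) f j <= - m.
        rewrite D1 hv sub0r.
        have L1 : \sum_(j in S :&: NZ) (m - f j) <= m *+ #|S :&: NZ|.
          rewrite -sumr_const; apply: ler_sum => j _.
          by rewrite gerBl; case/andP: (fT j).
        rewrite sumr_const.
        apply: le_trans (lerD L1 (lexx _)) _.
        rewrite hd mulrnDr addrA mulNrn subrr add0r mulNrn lerN2.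
        by rewrite mulrS lerDl mulrn_wge0 // ltW.
      rewrite lerBlDr in ub.
      have Tb : \sum_(j < n) phi j < c - m.
        by apply: le_lt_trans ub _; rewrite addrC ltrD2r.
      right; split.
        by apply: lt_le_trans Tb _; rewrite gerBl ltW.
      move=> i; apply: le_trans (ltW Tb); rewrite gerBl.
      by case/andP: (phT i).
  - (* b < a : fewer nonzero coordinates *)
    apply: IH; first exact: mixT.
    have E : [set j | mix S f ps j != m] = (NZ :\: S) :|: (S :\: NZ).
      apply/setP => j; rewrite !inE /mix /ps.
      case: (j \in S); case: (f j =P m) => [fm|/eqP fm] /=; rewrite ?fm ?eqxx ?vm //.
    rewrite E.
    apply: (leq_ltn_trans (leq_card_setU _ _).1).
    rewrite -(cardsID S NZ) setIC addnC ltn_add2r; exact: hab.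
have key : forall k f, in_Theta c f -> (#|[set j | f j != m]| <= k)%N -> G f <= 0.
  elim=> [|k IHk] f fT hk; apply: step => // f' f'T hlt.
    by move: (leq_trans hlt hk).
  by apply: IHk => //; rewrite -ltnS; apply: leq_trans hlt hk.
have H := key _ th0 th0T (leqnn _).
have : \sum_(i < n) vcg c th0 i < \sum_(i < n) vcg c th0 i + G th0 by rewrite -Gsplit.
by rewrite ltrDl => /lt_le_trans/(_ H); rewrite ltxx.
Qed.
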